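(* Let $\mathcal{G}$ be a hypergraph with rank $r(\mathcal{G})=r$. Then the strong chromatic number satisfies $\gamma(\mathcal{G})\le 1+(r-1)\lambda_{\max}(A_{\mathcal{G}})$, where $\lambda_{\max}(A_{\mathcal{G}})$ is the largest eigenvalue of $A_{\mathcal{G}}$.
   Context: A hypergraph $\mathcal{G}=(V,E)$ has a finite vertex set $V$ and a set $E$ of subsets of $V$ (edges), each of cardinality at least $2$. The rank $r(\mathcal{G})$ is the maximum cardinality of an edge. Two distinct vertices are adjacent if some edge contains both. The adjacency matrix $A_{\mathcal{G}}$ has $(A_{\mathcal{G}})_{ij}=\sum_{e\in E,\, i,j\in e}\frac{1}{|e|-1}$ for $i\ne j$ and zero diagonal. A strong vertex coloring assigns colors to vertices so that any two adjacent vertices get different colors; the strong chromatic number $\gamma(\mathcal{G})$ is the minimum number of colors in a strong vertex coloring. *)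

(* Defs.v *)
From HB Require Import structures.
From mathcomp Require Import all_boot all_order all_algebra.
Set Implicit Arguments. Unset Strict Implicit. Unset Printing Implicit Defensive.
Import Order.TTheory GRing.Theory Num.Theory.
Local Open Scope ring_scope.

Definition is_hypergraph (V : finType) (E : {set {set V}}) : Prop :=
  forall e, e \in E -> (2 <= #|e|)%N.

Definition hrank (V : finType) (E : {set {set V}}) : nat :=
  (\max_(e in E) #|e|)%N.

Definition hadj (V : finType) (E : {set {set V}}) (x y : V) : bool :=
  (x != y) && [exists e in E, (x \in e) && (y \in e)].

Definition strong_coloring (V : finType) (E : {set {set V}}) (k : nat)
  (c : {ffun V -> 'I_k}) : bool :=
  [forall x, forall y, hadj E x y ==> (c x != c y)].

Definition colorable (V : finType) (E : {set {set V}}) (k : nat) : bool :=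
  [exists c : {ffun V -> 'I_k}, strong_coloring E c].

Lemma colorable_card (V : finType) (E : {set {set V}}) :
  exists k, colorable E k.
Proof.
exists #|V|; apply/existsP; exists [ffun x => enum_rank x].
apply/forallP => x; apply/forallP => y; apply/implyP => /andP[nxy _].
by rewrite !ffunE; apply: contra nxy => /eqP /enum_rank_inj ->.
Qed.

Definition strong_chromatic (V : finType) (E : {set {set V}}) : nat :=
  ex_minn (colorable_card E).

Definition hadjmx (R : fieldType) (V : finType) (E : {set {set V}})
  : 'M[R]_#|V| :=
  \matrix_(i, j) (if i == j then 0 else
     \sum_(e in E | (enum_val i \in e) && (enum_val j \in e))
        ((#|e| - 1)%:R)^-1).

Definition is_lambda_max (R : realFieldType) (n : nat) (A : 'M[R]_n) (l : R)
  : Prop :=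
  eigenvalue A l /\ forall m, eigenvalue A m -> m <= l.

(* Main.v *)
Require Import Defs.
From HB Require Import structures.
From mathcomp Require Import all_boot all_order all_algebra.
From mathcomp.real_closed Require Import complex.
Import Order.TTheory GRing.Theory Num.Theory.
Local Open Scope ring_scope.
Local Open Scope sesquilinear_scope.
Lemma rayleigh (R : rcfType) n (A : 'M[R]_n) (l : R) :
  A^T = A -> (forall m, eigenvalue A m -> m <= l) ->
  forall x : 'rV[R]_n, (x *m A *m x^T) 0 0 <= l * (x *m x^T) 0 0.
Proof.
move=> As hl x.
pose f : {rmorphism R -> R[i]} := real_complex R.
pose Ac := map_mx f A.
have Ach : Ac \is hermsymmx.
  apply: realsym_hermsym.
    apply/is_hermitianmxP; rewrite expr0 scale1r.
    by apply/matrixP => i j; rewrite !mxE -[in LHS]As mxE.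
  by apply/mxOverP => i j; rewrite mxE; apply/complex_realP; exists (A i j).
have /orthomx_spectralP AcE := hermitian_normalmx Ach.
move: AcE.
set P := spectralmx Ac; set d := spectral_diag Ac => AcE.
have Pu : P \is unitarymx := spectral_unitarymx Ac.
have PU : P \in unitmx := spectral_unit Ac.
have invP : invmx P = P^t* := invmx_unitary Pu.
have dreal : forall i, d 0 i \is Num.real.
  by move=> i; exact: (mxOverP (hermitian_spectral_diag_real Ach) 0 i).
have dle : forall i, d 0 i <= f l.
  move=> i.
  have ev : eigenvalue Ac (d 0 i).
    apply/eigenvalueP; exists (row i P).
      rewrite -row_mul {1}AcE !mulmxA mulmxV // mul1mx row_mul row_diag_mx.
      by rewrite -scalemxAl -rowE.
    apply/negP=> /eqP r0.
    have : row i (P *m invmx P) = 0 by rewrite row_mul r0 mul0mx.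
    rewrite mulmxV // => /rowP /(_ i); rewrite !mxE eqxx /= => /eqP.
    by rewrite oner_eq0.
  rewrite eigenvalue_root_char -map_char_poly -(RRe_real (dreal i)) in ev.
  rewrite fmorph_root -eigenvalue_root_char in ev.
  by rewrite -(RRe_real (dreal i)) lecR; apply: hl.
pose xc := map_mx f x.
have xT : xc^t* = xc^T.
  apply/matrixP => i j; rewrite !mxE; apply/CrealP/complex_realP.
  by exists (x j i).
suff : f ((x *m A *m x^T) 0 0) <= f (l * (x *m x^T) 0 0) by rewrite lecR.
have -> : f ((x *m A *m x^T) 0 0) = (xc *m Ac *m xc^t*) 0 0.
  by rewrite xT map_trmx -!map_mxM [in RHS]mxE.
rewrite rmorphM /=.
have -> : f ((x *m x^T) 0 0) = (xc *m xc^t*) 0 0.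
  by rewrite xT map_trmx -!map_mxM [in RHS]mxE.
pose y := xc *m P^t*.
have yt : y^t* = P *m xc^t*.
  by rewrite /y trmx_mul map_mxM trmxCK.
have e1 : xc *m Ac *m xc^t* = y *m diag_mx d *m y^t*.
  by rewrite yt AcE invP !mulmxA.
have e2 : xc *m xc^t* = y *m y^t*.
  by rewrite yt /y mulmxA -[_ *m P^t* *m P]mulmxA -invP mulVmx // mulmx1.
clearbody y; rewrite e1 e2 [X in _ <= _ * X]mxE mulr_sumr [X in X <= _]mxE.
apply: ler_sum => j _.
have yd : (y *m diag_mx d) 0 j = y 0 j * d 0 j by rewrite mul_mx_diag mxE.
have yc : (y ^t*) j 0 = (y 0 j)^* by rewrite !mxE.
rewrite yd yc.
rewrite mulrAC [_ * (_ * _)]mulrC; apply: ler_wpM2l; last exact: dle.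
exact: mul_conjC_ge0.
Qed.
Local Close Scope sesquilinear_scope.
Lemma greedy (T : finType) (adj : rel T) (D : nat) :
  symmetric adj -> irreflexive adj ->
  (forall H : {set T}, H != set0 ->
     exists2 v, v \in H & (#|[set u in H | adj v u]| <= D)%N) ->
  forall S : {set T}, exists c : T -> 'I_D.+1,
    forall x y, x \in S -> y \in S -> adj x y -> c x != c y.
Proof.
move=> sym irr hP S.
have [k] := ubnP #|S|; elim: k S => // k IH S hS.
have [->|Sn0] := eqVneq S set0.
  by exists (fun _ => ord0) => x y; rewrite inE.
have [v vS hv] := hP S Sn0.
have [c hc] : exists c : T -> 'I_D.+1,
    forall x y, x \in S :\ v -> y \in S :\ v -> adj x y -> c x != c y.
  by apply: IH; rewrite (cardsD1 v S) vS add1n ltnS in hS.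
pose U := [set c u | u in [set u in S | adj v u]].
have hU : (#|U| < D.+1)%N by rewrite ltnS (leq_trans (leq_imset_card _ _)).
have [k0 k0U] : exists k0, k0 \notin U.
  have : ~: U != set0.
    rewrite -card_gt0; have := cardsC U; rewrite card_ord => e.
    by rewrite -(ltn_add2l #|U|) e addn0.
  by case/set0Pn => k0; rewrite inE => h; exists k0.
have inU : forall y, y \in S -> adj v y -> c y \in U.
  by move=> y yS avy; apply: imset_f; rewrite inE yS.
exists (fun x => if x == v then k0 else c x).
move=> x y xS yS axy.
have [exv|nxv] := eqVneq x v; have [eyv|nyv] := eqVneq y v.
- by subst; rewrite irr in axy.
- subst x; apply: contraNneq k0U => ->; exact: inU.
- subst y; apply: contraNneq k0U => <-; apply: inU => //; by rewrite sym.
- by apply: hc => //; rewrite !inE ?nxv ?nyv.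
Qed.
Section M.
Variables (R : rcfType) (V : finType) (E : {set {set V}}).
Hypothesis hE : is_hypergraph E.
Let A := hadjmx R E.
Let adj (i j : 'I_#|V|) := hadj E (enum_val i) (enum_val j).

Lemma adj_sym : symmetric adj.
Proof.
move=> i j; rewrite /adj /hadj eq_sym; congr (_ && _).
by apply/existsP/existsP => -[e /andP[eE /andP[h1 h2]]]; exists e; rewrite eE h1 h2.
Qed.

Lemma adj_irr : irreflexive adj.
Proof. by move=> i; rewrite /adj /hadj eqxx. Qed.

Lemma A_sym : A^T = A.
Proof.
apply/matrixP => i j; rewrite !mxE eq_sym; congr (if _ then _ else _).
by apply: eq_bigl => e; rewrite [X in _ && X]andbC.
Qed.

Lemma A_ge0 i j : 0 <= A i j.
Proof.
rewrite mxE; case: (_ == _) => //; apply: sumr_ge0 => e _.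
by rewrite invr_ge0 ler0n.
Qed.

Lemma A_adj i j : adj i j -> ((hrank E - 1)%:R)^-1 <= A i j.
Proof.
case/andP => nij /existsP [e /andP [eE eij]].
have ij : i != j by apply: contraNneq nij => ->.
rewrite mxE (negPf ij) (bigD1 e) /=; last by rewrite eE.
apply: (@le_trans _ _ (((#|e| - 1)%:R)^-1)); last first.
  by rewrite lerDl sumr_ge0 // => e' _; rewrite invr_ge0 ler0n.
have e2 := hE _ eE.
rewrite lef_pV2 ?posrE ?ltr0n ?subn_gt0 //; last first.
  apply: leq_trans e2 _; exact: leq_bigmax_cond.
by rewrite ler_nat leq_sub2r //; apply: leq_bigmax_cond.
Qed.

End M.

Lemma quadE (R : ringType) n (x : 'rV[R]_n) (M : 'M[R]_n) :
  (x *m M *m x^T) 0 0 = \sum_j (\sum_i x 0 i * M i j) * x 0 j.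
Proof. by rewrite mxE; apply: eq_bigr => j _; rewrite !mxE. Qed.

Lemma normE (R : ringType) n (x : 'rV[R]_n) :
  (x *m x^T) 0 0 = \sum_j x 0 j * x 0 j.
Proof. by rewrite mxE; apply: eq_bigr => j _; rewrite !mxE. Qed.

Lemma deg_bound (R : rcfType) (V : finType) (E : {set {set V}})
  (hE : is_hypergraph E) (l : R)
  (hl : forall m, eigenvalue (hadjmx R E) m -> m <= l) (D : nat)
  (H : {set 'I_#|V|}) (v0 : 'I_#|V|) (v0H : v0 \in H)
  (hd : forall v, v \in H ->
     (D <= #|[set u in H | hadj E (enum_val v) (enum_val u)]|)%N)
  (r1 : (1 <= hrank E - 1)%N) :
  D%:R <= (hrank E - 1)%:R * l.
Proof.
pose x := \row_i ((i \in H)%:R : R).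
have xE : forall i, x 0 i = (i \in H)%:R by move=> i; rewrite mxE.
clearbody x.
have := @rayleigh R _ _ _ (@A_sym R V E) hl x.
rewrite quadE normE.
set c := ((hrank E - 1)%:R)^-1 : R.
have c0 : 0 <= c by rewrite invr_ge0 ler0n.
have key : (c *+ D) * (\sum_j x 0 j * x 0 j)
   <= \sum_j (\sum_i x 0 i * hadjmx R E i j) * x 0 j.
  rewrite mulr_sumr; apply: ler_sum => j _.
  rewrite xE.
  have [jH|jH] := boolP (j \in H); last by rewrite !mulr0.
  rewrite !mulr1.
  apply: (@le_trans _ _ (\sum_(i in [set u in H | hadj E (enum_val j) (enum_val u)]) c)).
    rewrite sumr_const -(mulr_natr c D) -(mulr_natr c #|_|).
    apply: ler_wpM2l; first exact: c0.
    rewrite ler_nat; exact: hd.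
  rewrite big_mkcond; apply: ler_sum => i _; rewrite xE.
  case: ifP; rewrite inE.
    case/andP => iH aji; rewrite iH mul1r; apply: A_adj => //.
    by rewrite /= adj_sym.
  by move=> _; rewrite mulr_ge0 ?ler0n ?A_ge0.
have s0 : 0 < \sum_j x 0 j * x 0 j.
  rewrite (bigD1 v0) //= xE v0H mulr1.
  apply: (lt_le_trans ltr01); rewrite lerDl sumr_ge0 // => i _.
  by rewrite xE mulr_ge0 ?ler0n.
move=> h; have := le_trans key h; rewrite ler_pM2r //.
rewrite -(mulr_natr c D) mulrC /c ler_pdivrMr; last by rewrite ltr0n.
by rewrite mulrC.
Qed.

Theorem theorem3 (R : rcfType) (V : finType) (E : {set {set V}})
  (hE : is_hypergraph E) (lmax : R)
  (hl : is_lambda_max (hadjmx R E) lmax) :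
  (strong_chromatic E)%:R <= 1 + ((hrank E)%:R - 1) * lmax.
Proof.
case: hl => hl1 hl2.
have [E0|En0] := eqVneq E set0.
  have A0 : hadjmx R E = 0.
    apply/matrixP => i j; rewrite !mxE big_pred0 ?if_same // => e.
    by rewrite E0 in_set0.
  have l0 : lmax = 0.
    case/eigenvalueP: hl1 => v; rewrite A0 mulmx0 => /esym/eqP.
    rewrite scaler_eq0 => /orP [/eqP -> // | v0 vn0].
    by rewrite v0 in vn0.
  have g1 : (strong_chromatic E <= 1)%N.
    rewrite /strong_chromatic; case: (ex_minnP (colorable_card E)) => m _ hm; apply: hm.
    apply/existsP; exists [ffun _ => ord0]; apply/forallP => x.
    apply/forallP => y; apply/implyP => /andP [_ /existsP [e /andP [eE _]]].
    by rewrite E0 in_set0 in eE.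
  by rewrite l0 mulr0 addr0 lern1.
case/set0Pn: En0 => e0 e0E.
have r2 : (2 <= hrank E)%N := leq_trans (hE _ e0E) (leq_bigmax_cond _ e0E).
have nV : (0 < #|V|)%N.
  by apply: leq_trans (max_card e0); apply: leq_trans (hE _ e0E).
pose i0 : 'I_#|V| := Ordinal nV.
pose adj (i j : 'I_#|V|) := hadj E (enum_val i) (enum_val j).
pose Pb (D : nat) : bool := [forall H : {set 'I_#|V|}, (H != set0) ==>
   [exists v, (v \in H) && (#|[set u in H | adj v u]| <= D)%N]].
have exP : exists D, Pb D.
  exists #|V|; apply/forallP => H; apply/implyP => /set0Pn [v vH].
  apply/existsP; exists v; rewrite vH /=.
  by apply: leq_trans (max_card _) _; rewrite card_ord.
case: (ex_minnP exP) => D PD Dmin.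
have gD : (strong_chromatic E <= D.+1)%N.
  have hP : forall H : {set 'I_#|V|}, H != set0 ->
      exists2 v, v \in H & (#|[set u in H | adj v u]| <= D)%N.
    move=> H Hn0; have := forallP PD H; rewrite Hn0 /=.
    by case/existsP => v /andP [vH hv]; exists v.
  have [c hc] := @greedy _ adj D (@adj_sym V E) (@adj_irr V E) hP setT.
  rewrite /strong_chromatic; case: (ex_minnP (colorable_card E)) => m _ hm; apply: hm.
  apply/existsP; exists [ffun x => c (enum_rank x)]; apply/forallP => x.
  apply/forallP => y; apply/implyP => axy; rewrite !ffunE; apply: hc.
  - by rewrite inE.
  - by rewrite inE.
  - by rewrite /adj !enum_rankK.
have [H [v0 v0H _] hd] : exists2 H : {set 'I_#|V|}, (exists2 v, v \in H & True) &
    forall v, v \in H -> (D <= #|[set u in H | adj v u]|)%N.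
  case: D PD Dmin {gD} => [|D'] PD Dmin.
    by exists setT; [exists i0; rewrite ?inE | ].
  have : ~~ Pb D'.
    by apply/negP => h; have := Dmin _ h; rewrite ltnn.
  case/forallPn => H; rewrite negb_imply => /andP [Hn0 /existsPn hn].
  exists H; first by case/set0Pn: Hn0 => v vH; exists v.
  by move=> v vH; have := hn v; rewrite vH /= -ltnNge.
have r1 : (1 <= hrank E - 1)%N by rewrite subn_gt0.
have := @deg_bound R V E hE lmax hl2 D H v0 v0H hd r1.
rewrite natrB; last by apply: leq_trans r2.
move=> hD.
apply: (@le_trans _ _ (D.+1)%:R); first by rewrite ler_nat.
by rewrite -natr1 addrC lerD2l.
Qed.
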